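(* Fix integers $m\ge d\ge1$, $\lambda=d/m$, and $\sigma^2,\tau^2>0$. Then $L_d^{(m-d)}\big(\frac{x}{\sigma^2+\tau^2}\big)$ and $L_d^{(m-d)}\big(\frac{x}{\sigma^2}\big)\boxplus_{d,\lambda}L_d^{(m-d)}\big(\frac{x}{\tau^2}\big)$ have the same roots (they differ only by a nonzero constant factor).
   Context: $L_d^{(\alpha)}(x)=\sum_{i=0}^d\binom{d+\alpha}{d-i}\frac{(-x)^i}{i!}$. For $p=\sum_{i=0}^d(-1)^ia_ix^{d-i}$, $q=\sum_{i=0}^d(-1)^ib_ix^{d-i}$: $(p\boxplus_{d,\lambda}q)(x)=\sum_{k=0}^dx^{d-k}(-1)^k\sum_{i+j=k}\frac{(d-i)!(d-j)!}{d!(d-k)!}\frac{(m-i)!(m-j)!}{m!(m-k)!}a_ib_j$. *)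

(* Defs.v *)
From mathcomp Require Import all_boot all_order all_algebra.
Set Implicit Arguments. Unset Strict Implicit. Unset Printing Implicit Defensive.
Import Order.TTheory GRing.Theory Num.Theory.
Local Open Scope ring_scope.

Definition laguerre (R : fieldType) (d alpha : nat) : {poly R} :=
  \poly_(i < d.+1) ('C(d + alpha, d - i)%:R * (-1) ^+ i / (i`!)%:R).

Definition scale_arg (R : fieldType) (p : {poly R}) (s : R) : {poly R} :=
  p \Po (s^-1 *: 'X).

(* a_i such that p = sum_i (-1)^i a_i x^(d-i) *)
Definition acoef (R : fieldType) (d : nat) (p : {poly R}) (i : nat) : R :=
  (-1) ^+ i * p`_(d - i).

Definition rweight (R : fieldType) (d m i j k : nat) : R :=
  (((d - i)`! * (d - j)`!)%:R / ((d`! * (d - k)`!)%:R)) *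
  (((m - i)`! * (m - j)`!)%:R / ((m`! * (m - k)`!)%:R)).

(* Rectangular additive convolution p boxplus_{d, lambda} q with lambda = d/m;
   the parameter is given by the pair (d, m). *)
Definition rect_conv (R : fieldType) (d m : nat) (p q : {poly R}) : {poly R} :=
  \sum_(k < d.+1)
    ((-1) ^+ k * \sum_(i < k.+1)
        rweight R d m i (k - i) k * acoef d p i * acoef d q (k - i)) *: 'X^(d - k).

(* Main.v *)
Require Import Defs.
From mathcomp Require Import all_boot all_order all_algebra.
From mathcomp Require Import zify ring lra.
Import Order.TTheory GRing.Theory Num.Theory.
Local Open Scope ring_scope.

Lemma coef_scale (R : fieldType) (p : {poly R}) (a : R) n :
  (p \Po (a *: 'X))`_n = p`_n * a ^+ n.
Proof.
rewrite coef_comp_poly.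
under eq_bigr => i _ do rewrite exprZn coefZ coefXn.
case: (ltnP n (size p)) => hn.
  rewrite (bigD1 (Ordinal hn)) //= eqxx mulr1 big1 ?addr0 // => i /eqP neq.
  case: eqP => [e|_]; last by rewrite !mulr0.
  by exfalso; apply: neq; apply: val_inj => /=.
rewrite nth_default // mul0r big1 // => i _; case: eqP => [e|_]; last by rewrite !mulr0.
by have := ltn_ord i; rewrite -e; lia.
Qed.

Lemma binR (R : realFieldType) n r : (r <= n)%N ->
  ('C(n, r))%:R = (n`!)%:R / ((r`!)%:R * ((n - r)`!)%:R) :> R.
Proof.
move=> h; rewrite -(bin_fact h) !natrM mulfK //.
by rewrite mulf_neq0 // pnatr_eq0 -lt0n fact_gt0.
Qed.

Lemma factR (R : realFieldType) n : (n`!)%:R != 0 :> R.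
Proof. by rewrite pnatr_eq0 -lt0n fact_gt0. Qed.

Lemma sign_trick (R : ringType) (x y z : R) : z = 1 -> x = z * y -> x = y.
Proof. by move=> -> ->; rewrite mul1r. Qed.

Definition Kf (R : realFieldType) d m k (s t : R) :=
  (m`!)%:R / ((d`!)%:R * ((d-k)`!)%:R * ((m-k)`!)%:R * (k`!)%:R) * (s^-1 ^+ d * t^-1 ^+ d).

Lemma term (R : realFieldType) d m k i (s t : R) :
  (i <= k)%N -> (k <= d)%N -> (d <= m)%N -> 0 < s -> 0 < t ->
  rweight R d m i (k - i) k *
     ((-1) ^+ i *
      ('C(m, d - (d - i))%:R * (-1) ^+ (d - i) / (d - i)`!%:R *
       s^-1 ^+ (d - i))) *
     ((-1) ^+ (k - i) *
      ('C(m, d - (d - (k - i)))%:R * (-1) ^+ (d - (k - i)) /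
       (d - (k - i))`!%:R * t^-1 ^+ (d - (k - i))))
  = Kf R d m k s t * ((t ^+ (k - i) * s ^+ i) *+ 'C(k, i)).
Proof.
move=> hik hkd hdm hs ht.
have sg : (-1) ^+ i * (-1) ^+ (d - i) * (-1) ^+ (k - i) * (-1) ^+ (d - (k - i)) = 1 :> R.
  rewrite -!exprD.
  have -> : (i + (d - i) + (k - i) + (d - (k - i)) = 2 * d)%N by lia.
  by rewrite exprM expr2 mulrNN mulr1 expr1n.
apply: (@sign_trick _ _ _ _ sg).
have es : s^-1 ^+ d = s^-1 ^+ (d - i) * s^-1 ^+ i by rewrite -exprD subnK //; lia.
have et : t^-1 ^+ d = t^-1 ^+ (d - (k - i)) * t^-1 ^+ (k - i) by rewrite -exprD subnK //; lia.
rewrite /Kf /rweight es et !subKn; try lia.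
rewrite -[_ *+ 'C(k, i)]mulr_natr (@binR R m (i)); last lia.
rewrite (@binR R m (k - i)); last lia.
rewrite (@binR R k (i)) //.
rewrite !natrM !exprVn.
have s0 : s != 0 by rewrite gt_eqF.
have t0 : t != 0 by rewrite gt_eqF.
field.
by rewrite !factR !expf_neq0.
Qed.

Lemma final (R : realFieldType) d m k (s t : R) :
  (k <= d)%N -> (d <= m)%N -> 0 < s -> 0 < t ->
  (-1) ^+ k * (Kf R d m k s t * (t + s) ^+ k) =
  (-1) ^+ d * (s + t) ^+ d / ((d`!)%:R * (s ^+ d * t ^+ d)) *
  ('C(m, d - (d - k))%:R * (-1) ^+ (d - k) / (d - k)`!%:R *
   (s + t)^-1 ^+ (d - k)).
Proof.
move=> hkd hdm hs ht.
have sg : (-1) ^+ d * (-1) ^+ (d - k) = (-1) ^+ k :> R.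
  rewrite -exprD.
  have -> : (d + (d - k) = 2 * (d - k) + k)%N by lia.
  by rewrite exprD exprM expr2 mulrNN mulr1 expr1n mul1r.
rewrite -sg.
have eu : (s + t) ^+ d = (s + t) ^+ (d - k) * (s + t) ^+ k by rewrite -exprD subnK.
rewrite /Kf eu subKn // (@binR R m k); last lia.
rewrite (addrC t s) !exprVn.
have s0 : s != 0 by rewrite gt_eqF.
have t0 : t != 0 by rewrite gt_eqF.
have u0 : s + t != 0 by rewrite gt_eqF // addr_gt0.
field.
by rewrite !factR !expf_neq0.
Qed.

Theorem mainTheorem10 (R : realFieldType) (d m : nat) (s t : R) :
  (1 <= d)%N -> (d <= m)%N -> 0 < s -> 0 < t ->
  exists c : R, c != 0 /\
    rect_conv d m (scale_arg (laguerre R d (m - d)) s)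
                  (scale_arg (laguerre R d (m - d)) t)
    = c *: scale_arg (laguerre R d (m - d)) (s + t).
Proof.
move=> hd hdm hs ht.
have hL : forall a : R, scale_arg (laguerre R d (m - d)) a =
   \poly_(i < d.+1) (('C(m, d - i))%:R * (-1) ^+ i / (i`!)%:R * a^-1 ^+ i).
  move=> a; apply/polyP=> n; rewrite /scale_arg coef_scale !coef_poly.
  by case: ifP; rewrite ?mul0r // subnKC.
exists ((-1) ^+ d * (s + t) ^+ d / ((d`!)%:R * (s ^+ d * t ^+ d))).
split.
  rewrite mulf_neq0 ?invr_eq0 ?mulf_neq0 ?signr_eq0 ?expf_neq0 ?factR //;
  by rewrite gt_eqF // ?addr_gt0.
rewrite !hL /rect_conv [in RHS]poly_def scaler_sumr [in RHS](reindex_inj rev_ord_inj) /=.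
apply: eq_bigr => k _; rewrite scalerA subSS; congr (_ *: _).
under eq_bigr => i _ do rewrite /acoef !coef_poly !ltnS !leq_subr /=.
have hk : (k <= d)%N by rewrite -ltnS.
rewrite (eq_bigr (fun i : 'I_k.+1 => Kf R d m k s t * ((t ^+ (k - i) * s ^+ i) *+ 'C(k, i)))); last first.
  by move=> i _; apply: term => //; rewrite -ltnS.
by rewrite -mulr_sumr -exprDn; apply: final.
Qed.
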